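(* Let $p\ge2$ be an integer and let $f\in\mathcal{R}$ satisfy $U_pf=\lambda f$ for some $\lambda\neq0$. If $f(x)=x^m\tilde f(x)$ for some positive integer $m$ and some rational function $\tilde f$ regular at $0$ with $\tilde f(0)\neq0$, then $p\nmid m$.
   Context: $\mathcal{R}$ denotes the real vector space of rational functions $f(x)=A(x)/B(x)$ with $A,B\in\mathbb{R}[x]$, $B(0)\neq 0$ and $\deg A<\deg B$. For $f$ with Taylor expansion $f(x)=\sum_{n\ge0}a_nx^n$ at $0$ and a positive integer $p$, $U_pf(x)=\sum_{n\ge 0}a_{pn}x^n$. *)

(* Defs.v *)
From HB Require Import structures.
From mathcomp Require Import all_boot all_order all_algebra.
From mathcomp Require Export reals.
Set Implicit Arguments. Unset Strict Implicit. Unset Printing Implicit Defensive.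
Import Order.TTheory GRing.Theory Num.Theory.
Local Open Scope ring_scope.

(* f = A/B belongs to the space \mathcal{R}: B(0) <> 0 and deg A < deg B
   (size = deg + 1, size 0 = 0, so deg A < deg B <-> size A < size B). *)
Definition inRcal (R : realType) (A B : {poly R}) : Prop :=
  B.[0] != 0 /\ (size A < size B)%N.

(* a is the Taylor coefficient sequence at 0 of A/B (with B(0) <> 0):
   B(x) * sum_n a_n x^n = A(x) as formal power series. *)
Definition taylor_coefs (R : realType) (A B : {poly R}) (a : nat -> R) : Prop :=
  forall n : nat, \sum_(k < n.+1) B`_k * a (n - k)%N = A`_n.

(* Coefficient sequence of U_p f, where a is the coefficient sequence of f. *)
Definition Up (R : realType) (p : nat) (a : nat -> R) : nat -> R :=
  fun n => a (p * n)%N.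

(* Main.v *)
Require Import Defs.
From HB Require Import structures.
From mathcomp Require Import all_boot all_order all_algebra reals.
From mathcomp Require Import zify ring.
Import Order.TTheory GRing.Theory Num.Theory.
Local Open Scope ring_scope.

Lemma low_mul (R : realType) (D Q : {poly R}) (N : nat) :
  (forall n, (n < N)%N -> Q`_n = 0) -> forall n, (n < N)%N -> (D * Q)`_n = 0.
Proof.
move=> HQ n Hn; rewrite coefM big1 // => i _.
by rewrite HQ ?mulr0 //; apply: leq_ltn_trans (leq_subr _ _) Hn.
Qed.

Lemma low_div (R : realType) (B Q : {poly R}) (N : nat) :
  B`_0 != 0 -> (forall n, (n < N)%N -> (B * Q)`_n = 0) ->
  forall n, (n < N)%N -> Q`_n = 0.
Proof.
move=> HB H n; elim/ltn_ind: n => n IH Hn.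
have := H n Hn; rewrite coefM big_ord_recl /= subn0.
rewrite big1 ?addr0; last first.
  move=> i _; rewrite IH ?mulr0 //;
    last by apply: leq_ltn_trans (leq_subr _ _) Hn.
    by rewrite /bump /=; have := ltn_ord i; lia.
by move/eqP; rewrite mulf_eq0 (negbTE HB) /= => /eqP.
Qed.

Theorem mainTheorem13 (R : realType) (p : nat) (A B : {poly R}) (a : nat -> R)
    (lam : R) (m : nat) (C D : {poly R}) :
  (2 <= p)%N ->
  inRcal A B ->
  taylor_coefs A B a ->
  lam != 0 ->
  (forall n : nat, Up p a n = lam * a n) ->
  (0 < m)%N ->
  D.[0] != 0 ->
  C.[0] / D.[0] != 0 ->
  A * D = 'X^m * C * B ->
  ~~ (p %| m)%N.
Proof.
move=> Hp [HB0 _] Ht Hlam HU Hm HD0 HCD HAD.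
rewrite horner_coef0 in HB0; rewrite horner_coef0 in HD0; rewrite !horner_coef0 in HCD.
have HC0 : C`_0 != 0 by move: HCD; apply: contraNneq => ->; rewrite mul0r.
pose N := m.+1.
pose P : {poly R} := \poly_(i < N) a i.
have HP : forall n, (n < N)%N -> P`_n = a n by move=> n Hn; rewrite coef_poly Hn.
have H1 : forall n, (n < N)%N -> (B * P - A)`_n = 0.
  move=> n Hn; rewrite coefB coefM -(Ht n); apply/eqP; rewrite subr_eq0; apply/eqP.
  apply: eq_bigr => i _; rewrite HP //.
  by apply: leq_ltn_trans (leq_subr _ _) Hn.
have E : D * (B * P - A) = B * (D * P - 'X^m * C).
  by rewrite mulrBr mulrBr (mulrC D A) HAD; ring.
have H2 := @low_mul _ D _ _ H1; rewrite E in H2.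
have H3 := @low_div _ B _ _ HB0 H2.
have H4 : forall n, (n < N)%N -> (D * P)`_n = ('X^m * C)`_n.
  by move=> n Hn; apply/eqP; rewrite -subr_eq0 -coefB H3.
have H5 : forall n, (n < m)%N -> (D * P)`_n = 0.
  move=> n Hn; rewrite H4 ?coefXnM ?Hn //; exact: ltnW.
have H6 := @low_div _ D _ _ HD0 H5.
have Ha : forall n, (n < m)%N -> a n = 0.
  by move=> n Hn; rewrite -HP ?H6 //; apply: ltnW.
have Ham : a m != 0.
  have := H4 m (ltnSn m); rewrite coefXnM ltnn subnn coefM big_ord_recl /= subn0.
  rewrite big1 ?addr0; last first.
    move=> i _; rewrite H6 ?mulr0 //.
    by rewrite /bump /=; have := ltn_ord i; lia.
  rewrite HP // => Hm'; move: HC0; rewrite -Hm'; apply: contraNneq => ->.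
  by rewrite mulr0.
apply/negP => /dvdnP [k Hk].
have Hkm : (k < m)%N.
  nia.
move: Ham; rewrite Hk mulnC -/(Up p a k) HU Ha // mulr0 eqxx.
by [].
Qed.
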